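(* Let $(\mathcal{X},d)$ be a finite metric space, $P$ a probability distribution on $\mathcal{X}$, and $k\ge 1$ an integer. Let $O\in\mathcal{X}_k$ be an optimal solution of the $k$-RP instance, i.e., $O$ minimizes $\mathbb{E}_{X\sim P_k}[d_k(O,X)]$ over $\mathcal{X}_k$. If $S$ is a random $k$-multiset obtained by drawing $k$ points of $\mathcal{X}$ i.i.d. according to $P$ (i.e., $S\sim P_k$), then $$\mathbb{E}_{S\sim P_k}\mathbb{E}_{X\sim P_k}[d_k(S,X)]\le 2\cdot \mathbb{E}_{X\sim P_k}[d_k(O,X)].$$
   Context: $\mathcal{X}_k$ denotes the set of all multisets of exactly $k$ points of $\mathcal{X}$. For $U,V\in\mathcal{X}_k$, $d_k(U,V)$ is the minimum, over all perfect matchings between the $k$ elements of $U$ and the $k$ elements of $V$ (counted with multiplicity), of the sum of $d(u,v)$ over matched pairs $(u,v)$. $P_k$ is the distribution on $\mathcal{X}_k$ of the multiset of $k$ points drawn i.i.d. from $P$. The $k$-RP (robotaxi placement) problem asks for $S\in\mathcal{X}_k$ minimizing its cost $\mathbb{E}_{X\sim P_k}[d_k(S,X)]$. *)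

(* Defs.v *)
From HB Require Import structures.
From mathcomp Require Import all_boot all_order all_algebra all_fingroup.
Set Implicit Arguments. Unset Strict Implicit. Unset Printing Implicit Defensive.
Import Order.TTheory GRing.Theory Num.Theory.
Local Open Scope ring_scope.

(* A k-multiset of points of X is represented by a k-tuple (ordered list)
   t : {ffun 'I_k -> X}; two tuples represent the same multiset iff they
   differ by a permutation of 'I_k.  All quantities below are invariant
   under such permutations. *)
Notation kpts X k := {ffun 'I_k -> X}.

Definition is_metric (R : realFieldType) (X : finType) (d : X -> X -> R) :=
  [/\ forall x y, 0 <= d x y,
      forall x y, d x y = 0 <-> x = y,
      forall x y, d x y = d y x &
      forall x y z, d x z <= d x y + d y z].

Definition is_distr (R : realFieldType) (X : finType) (P : X -> R) :=
  (forall x, 0 <= P x) /\ \sum_(x : X) P x = 1.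

Definition match_cost (R : realFieldType) (X : finType) (d : X -> X -> R)
  (k : nat) (U V : kpts X k) (s : 'S_k) : R :=
  \sum_(i < k) d (U i) (V (s i)).

(* The seed value is the cost of the identity matching,
   which is itself one of the candidates, so this is exactly the minimum. *)
Definition dk (R : realFieldType) (X : finType) (d : X -> X -> R)
  (k : nat) (U V : kpts X k) : R :=
  \big[Order.min/match_cost d U V 1%g]_(s : 'S_k) match_cost d U V s.

Definition Ek (R : realFieldType) (X : finType) (P : X -> R) (k : nat)
  (f : kpts X k -> R) : R :=
  \sum_(t : kpts X k) (\prod_(i < k) P (t i)) * f t.

Definition rp_cost (R : realFieldType) (X : finType) (d : X -> X -> R)
  (P : X -> R) (k : nat) (S : kpts X k) : R :=
  Ek P (fun Y => dk d S Y).

(* Main.v *)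
Require Import Defs.
From HB Require Import structures.
From mathcomp Require Import all_boot all_order all_algebra all_fingroup.
Import Order.TTheory GRing.Theory Num.Theory.
Local Open Scope ring_scope.

Section Aux.
Variables (R : realFieldType) (X : finType) (d : X -> X -> R) (k : nat).

Lemma dk_le (U V : {ffun 'I_k -> X}) s : dk d U V <= match_cost d U V s.
Proof.
exact: bigmin_le.
Qed.

Lemma dk_ex (U V : {ffun 'I_k -> X}) : exists s, dk d U V = match_cost d U V s.
Proof.
rewrite /dk; apply: (big_ind (fun x => exists s, x = match_cost d U V s)).
- by exists 1%g.
- move=> x y [s ->] [t ->]; case: (leP (match_cost d U V s) (match_cost d U V t)) => h.
  + by exists s.
  + by exists t.
- by move=> s _; exists s.
Qed.

Hypothesis hd : is_metric d.

Lemma dk_sym (U V : {ffun 'I_k -> X}) : dk d U V <= dk d V U.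
Proof.
have [s ->] := dk_ex V U.
apply: le_trans (dk_le U V s^-1%g) _; rewrite /match_cost.
rewrite (reindex_inj (@perm_inj _ s)) /=.
rewrite le_eqVlt; apply/orP; left; apply/eqP/eq_bigr => i _; rewrite permK.
by case: hd => _ _ -> _.
Qed.

Lemma dk_tri (U W V : {ffun 'I_k -> X}) : dk d U V <= dk d U W + dk d W V.
Proof.
have [s ->] := dk_ex U W; have [t ->] := dk_ex W V.
apply: le_trans (dk_le U V (s * t)%g) _; rewrite /match_cost.
rewrite [X in _ <= _ + X](reindex_inj (@perm_inj _ s)) /= -big_split /=.
apply: ler_sum => i _; rewrite permM.
by case: hd => _ _ _ ->.
Qed.

End Aux.

Lemma sumW (R : realFieldType) (X : finType) (P : X -> R) k :
  is_distr P -> \sum_(t : {ffun 'I_k -> X}) \prod_(i < k) P (t i) = 1.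
Proof.
case=> _ h1.
rewrite -(bigA_distr_bigA (fun (_ : 'I_k) (x : X) => P x)) /=.
by rewrite big1 // => i _; exact: h1.
Qed.

Theorem theorem1 (R : realFieldType) (X : finType) (d : X -> X -> R)
  (P : X -> R) (k : nat) (O : {ffun 'I_k -> X}) :
  is_metric d -> is_distr P -> (0 < k)%N ->
  (forall U : {ffun 'I_k -> X}, rp_cost d P O <= rp_cost d P U) ->
  Ek P (fun S : {ffun 'I_k -> X} => rp_cost d P S) <= 2 * rp_cost d P O.
Proof.
move=> hd hP _ _.
have W0 : forall t : {ffun 'I_k -> X}, 0 <= \prod_(i < k) P (t i).
  by move=> t; apply: prodr_ge0 => i _; case: hP => h _; exact: h.
rewrite /Ek /rp_cost /Ek.
apply: (@le_trans _ _ (\sum_(t : {ffun 'I_k -> X}) (\prod_(i < k) P (t i)) *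
   (dk d O t + \sum_(t0 : {ffun 'I_k -> X}) (\prod_(i < k) P (t0 i)) * dk d O t0))).
  apply: ler_sum => S _; apply: ler_wpM2l => //.
  apply: (@le_trans _ _ (\sum_(t0 : {ffun 'I_k -> X}) (\prod_(i < k) P (t0 i)) *
     (dk d S O + dk d O t0))).
    by apply: ler_sum => Y _; apply: ler_wpM2l => //; exact: dk_tri.
  rewrite (eq_bigr (fun Y : {ffun 'I_k -> X} => (\prod_(i < k) P (Y i)) * dk d S O +
       (\prod_(i < k) P (Y i)) * dk d O Y)); last by move=> Y _; rewrite mulrDr.
  rewrite big_split /= -mulr_suml sumW // mul1r lerD2r.
  exact: dk_sym.
rewrite (eq_bigr (fun t : {ffun 'I_k -> X} => (\prod_(i < k) P (t i)) * dk d O t +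
   (\prod_(i < k) P (t i)) * \sum_(t0 : {ffun 'I_k -> X}) (\prod_(i < k) P (t0 i)) * dk d O t0)); last by move=> t _; rewrite mulrDr.
by rewrite big_split /= -mulr_suml sumW // mul1r mulr2n mulrDl mul1r.
Qed.
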